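(* Let $s=e^{2\pi i\theta}$ with $\theta$ irrational, let $\varepsilon>0$ and let $m$ be a positive integer. Then there exists $\delta>0$ such that for every $a$ with $|a|<1$ and $|s-a|<\delta$ we have $|Q_a^i(c_a)|>1-\varepsilon$ for all $i=0,1,\dots,m$.
   Context: For $|a|<1$, $Q_a(z)=z\frac{a-z}{1-\overline a z}$, and $c_a=\frac{a}{1+\sqrt{1-|a|^2}}$ is the unique critical point of $Q_a$ in the open unit disk. $Q_a^i$ denotes the $i$-th iterate. *)

(* Defs.v *)
From Stdlib Require Import Reals ZArith.
From Coquelicot Require Import Coquelicot.
Open Scope R_scope.

Definition expi2pi (theta : R) : C := (cos (2 * PI * theta), sin (2 * PI * theta)).

Definition Q (a z : C) : C := (z * (a - z) / (1 - Cconj a * z))%C.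

Definition crit (a : C) : C := (a / RtoC (1 + sqrt (1 - (Cmod a) ^ 2)))%C.

Definition Qiter (a : C) (i : nat) (z : C) : C := Nat.iter i (Q a) z.

Definition irrational (x : R) : Prop :=
  forall (p q : Z), q <> 0%Z -> x <> IZR p / IZR q.

(* Main.v *)
Require Import Defs.
From Stdlib Require Import Reals ZArith Lra Lia.
From Coquelicot Require Import Coquelicot.
Open Scope R_scope.

Definition tends (s : C) (f : C -> C) (L : C) :=
  forall e, 0 < e -> exists d, 0 < d /\
    forall a, Cmod a < 1 -> Cmod (s - a)%C < d -> Cmod (f a - L)%C < e.

Lemma Cmod_sub_sym (x y : C) : Cmod (x - y)%C = Cmod (y - x)%C.
Proof. replace (x - y)%C with (- (y - x))%C by ring. apply Cmod_opp. Qed.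

Lemma Cmod_tri3 (x y : C) : Cmod x <= Cmod (x - y)%C + Cmod y.
Proof. replace x with ((x - y) + y)%C at 1 by ring. apply Cmod_triangle. Qed.

Lemma tends_ext s f g L : tends s f L -> (forall a, Cmod a < 1 -> f a = g a) -> tends s g L.
Proof.
  intros H E e he. destruct (H e he) as [d [hd Hd]]. exists d; split; auto.
  intros a h1 h2. rewrite <- E by auto. auto.
Qed.

Lemma tends_const s L : tends s (fun _ => L) L.
Proof.
  intros e he. exists 1; split; [lra|]. intros. replace (L - L)%C with (RtoC 0) by ring.
  rewrite Cmod_0; auto.
Qed.

Lemma tends_id s : tends s (fun a => a) s.
Proof.
  intros e he. exists e; split; auto. intros a _ h. rewrite Cmod_sub_sym; auto.
Qed.

Lemma tends_conj s : tends s (fun a => Cconj a) (Cconj s).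
Proof.
  intros e he. exists e; split; auto. intros a _ h.
  replace (Cconj a - Cconj s)%C with (Cconj (a - s)).
  rewrite Cmod_conj, Cmod_sub_sym; auto.
  unfold Cconj, Cminus, Cplus, Copp; simpl. f_equal; ring.
Qed.

Lemma tends_plus s f g L M : tends s f L -> tends s g M -> tends s (fun a => f a + g a)%C (L + M)%C.
Proof.
  intros Hf Hg e he.
  destruct (Hf (e/2)) as [d1 [hd1 H1]]; [lra|].
  destruct (Hg (e/2)) as [d2 [hd2 H2]]; [lra|].
  exists (Rmin d1 d2); split; [apply Rmin_pos; auto|].
  intros a ha hd. pose proof (Rmin_l d1 d2); pose proof (Rmin_r d1 d2).
  replace (f a + g a - (L + M))%C with ((f a - L) + (g a - M))%C by ring.
  eapply Rle_lt_trans; [apply Cmod_triangle|].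
  specialize (H1 a ha ltac:(lra)). specialize (H2 a ha ltac:(lra)). lra.
Qed.

Lemma tends_opp s f L : tends s f L -> tends s (fun a => - f a)%C (- L)%C.
Proof.
  intros Hf e he. destruct (Hf e he) as [d [hd H]]. exists d; split; auto.
  intros a h1 h2. replace (- f a - - L)%C with (- (f a - L))%C by ring.
  rewrite Cmod_opp; auto.
Qed.

Lemma tends_minus s f g L M : tends s f L -> tends s g M -> tends s (fun a => f a - g a)%C (L - M)%C.
Proof. intros. apply tends_plus; auto. apply tends_opp; auto. Qed.

Lemma tends_mult s f g L M : tends s f L -> tends s g M -> tends s (fun a => f a * g a)%C (L * M)%C.
Proof.
  intros Hf Hg e he.
  set (K := 1 + Cmod L + Cmod M).
  assert (hK : 1 <= K) by (unfold K; pose proof (Cmod_ge_0 L); pose proof (Cmod_ge_0 M); lra).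
  set (e' := Rmin 1 (e / K)).
  assert (he' : 0 < e') by (apply Rmin_pos; [lra| apply Rdiv_lt_0_compat; lra]).
  destruct (Hf e') as [d1 [hd1 H1]]; auto.
  destruct (Hg e') as [d2 [hd2 H2]]; auto.
  exists (Rmin d1 d2); split; [apply Rmin_pos; auto|].
  intros a ha hd. pose proof (Rmin_l d1 d2); pose proof (Rmin_r d1 d2).
  specialize (H1 a ha ltac:(lra)). specialize (H2 a ha ltac:(lra)).
  replace (f a * g a - L * M)%C with ((f a - L) * (g a - M) + (L * (g a - M) + M * (f a - L)))%C by ring.
  eapply Rle_lt_trans; [apply Cmod_triangle|].
  eapply Rle_lt_trans; [apply Rplus_le_compat_l; apply Cmod_triangle|].
  rewrite !Cmod_mult.
  pose proof (Cmod_ge_0 L); pose proof (Cmod_ge_0 M);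
  pose proof (Cmod_ge_0 (f a - L)); pose proof (Cmod_ge_0 (g a - M)).
  assert (e1 : e' <= 1) by apply Rmin_l.
  assert (e2 : e' * K <= e).
  { assert (e' <= e / K) by apply Rmin_r.
    replace e with ((e / K) * K) by (field; lra). apply Rmult_le_compat_r; lra. }
  unfold K in e2.
  assert (Cmod (f a - L) * Cmod (g a - M) <= e' * Cmod (g a - M)) by (apply Rmult_le_compat_r; lra).
  assert (Cmod L * Cmod (g a - M) <= Cmod L * e') by (apply Rmult_le_compat_l; lra).
  assert (Cmod M * Cmod (f a - L) <= Cmod M * e') by (apply Rmult_le_compat_l; lra).
  assert (e' * Cmod (g a - M) < e' * e') by (apply Rmult_lt_compat_l; lra).
  assert (e' * e' <= e' * 1) by (apply Rmult_le_compat_l; lra).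
  nra.
Qed.

Lemma tends_inv s g M : tends s g M -> M <> 0%C -> tends s (fun a => / g a)%C (/ M)%C.
Proof.
  intros Hg HM e he.
  pose proof (proj1 (Cmod_gt_0 M) HM) as hm. set (m := Cmod M) in *.
  set (e' := Rmin (m/2) (e * m * m / 2)).
  assert (he' : 0 < e') by (apply Rmin_pos; [lra| ]; apply Rdiv_lt_0_compat; [|lra];
    apply Rmult_lt_0_compat; [apply Rmult_lt_0_compat|]; lra).
  destruct (Hg e' he') as [d [hd H]]. exists d; split; auto.
  intros a ha hda. specialize (H a ha hda).
  assert (e'1 : e' <= m/2) by apply Rmin_l.
  assert (e'2 : e' <= e * m * m / 2) by apply Rmin_r.
  pose proof (Cmod_tri3 M (g a)) as T. rewrite Cmod_sub_sym in T. fold m in T.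
  assert (hg : m / 2 < Cmod (g a)) by lra.
  assert (gn : g a <> 0%C) by (intro E; rewrite E, Cmod_0 in hg; lra).
  replace (/ g a - / M)%C with ((M - g a) / (g a * M))%C by (field; auto).
  rewrite Cmod_div by (intro E; apply (f_equal Cmod) in E; rewrite Cmod_mult, Cmod_0 in E; fold m in E; nra).
  rewrite Cmod_mult, Cmod_sub_sym. fold m.
  apply Rmult_lt_reg_r with (Cmod (g a) * m). nra.
  unfold Rdiv. rewrite Rmult_assoc, Rinv_l by nra. nra.
Qed.

Lemma tends_div s f g L M : tends s f L -> tends s g M -> M <> 0%C ->
  tends s (fun a => f a / g a)%C (L / M)%C.
Proof. intros. apply tends_mult; auto. apply tends_inv; auto. Qed.

Lemma expi_mult x y : (expi2pi x * expi2pi y)%C = expi2pi (x + y).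
Proof.
  unfold expi2pi, Cmult; simpl.
  replace (2 * PI * (x + y)) with (2 * PI * x + 2 * PI * y) by ring.
  rewrite cos_plus, sin_plus. f_equal; ring.
Qed.

Lemma expi_conj x : Cconj (expi2pi x) = expi2pi (- x).
Proof.
  unfold expi2pi, Cconj; simpl.
  replace (2 * PI * - x) with (- (2 * PI * x)) by ring.
  rewrite cos_neg, sin_neg. reflexivity.
Qed.

Lemma expi_0 : expi2pi 0 = 1%C.
Proof. unfold expi2pi. rewrite Rmult_0_r, cos_0, sin_0. reflexivity. Qed.

Lemma expi_mod x : Cmod (expi2pi x) = 1.
Proof.
  unfold expi2pi, Cmod; simpl. rewrite Rmult_1_r, Rmult_1_r.
  rewrite (Rplus_comm (cos _ * _)), <- !Rsqr_def, sin2_cos2. apply sqrt_1.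
Qed.

Lemma expi_neq1 theta (k : nat) : irrational theta -> (1 <= k)%nat ->
  expi2pi (INR k * theta) <> 1%C.
Proof.
  intros Hirr Hk E. apply (f_equal snd) in E. unfold expi2pi in E; simpl in E.
  destruct (sin_eq_0_0 _ E) as [n Hn].
  apply (Hirr n (2 * Z.of_nat k)%Z). lia.
  rewrite mult_IZR, <- INR_IZR_INZ.
  assert (0 < INR k) by (apply lt_0_INR; lia).
  pose proof PI_RGT_0.
  apply Rmult_eq_reg_l with (2 * PI * INR k). 2: nra.
  replace (2 * PI * INR k * theta) with (IZR n * PI) by lra. field. lra.
Qed.

Lemma crit_tends s : Cmod s = 1 -> tends s crit s.
Proof.
  intros Hs e he.
  exists (Rmin (e/2) (e*e/8)). split. apply Rmin_pos; nra.
  intros a ha hd. pose proof (Rmin_l (e/2) (e*e/8)); pose proof (Rmin_r (e/2) (e*e/8)).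
  pose proof (Cmod_tri3 s a) as T. rewrite Hs in T.
  pose proof (Cmod_ge_0 a).
  set (u := 1 - Cmod a ^ 2).
  assert (hu : 0 <= u) by (unfold u; nra).
  set (r := sqrt u).
  assert (hr0 : 0 <= r) by apply sqrt_pos.
  assert (hr2 : r * r = u) by (apply sqrt_sqrt; auto).
  assert (hre : r < e / 2).
  { assert (u <= 2 * Cmod (s - a)) by (unfold u; nra). nra. }
  assert (E : (crit a - a)%C = (a * RtoC (/ (1 + r) - 1))%C).
  { unfold crit. fold u. fold r. rewrite RtoC_minus, RtoC_inv by lra. field.
    intro Z. apply (f_equal Re) in Z. simpl in Z. lra. }
  replace (crit a - s)%C with ((crit a - a) + (a - s))%C by ring.
  eapply Rle_lt_trans; [apply Cmod_triangle|]. rewrite E, Cmod_mult, Cmod_R.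
  rewrite (Cmod_sub_sym a s).
  assert (Rabs (/ (1 + r) - 1) <= r).
  { assert (/ (1 + r) <= 1) by (rewrite <- Rinv_1; apply Rinv_le_contravar; lra).
    assert (1 - r <= / (1 + r)).
    { apply Rmult_le_reg_l with (1 + r). lra. rewrite Rinv_r by lra. nra. }
    apply Rabs_le; lra. }
  pose proof (Rabs_pos (/ (1 + r) - 1)).
  assert (Cmod a * Rabs (/ (1 + r) - 1) <= Rabs (/ (1 + r) - 1)) by nra.
  lra.
Qed.

Lemma Q_crit a : Cmod a < 1 -> Q a (crit a) = (crit a * crit a)%C.
Proof.
  intros ha. pose proof (Cmod_ge_0 a).
  unfold Q, crit.
  set (u := 1 - Cmod a ^ 2).
  assert (hu : 0 < u) by (unfold u; nra).
  set (r := sqrt u).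
  assert (hr0 : 0 < r) by (apply sqrt_lt_R0; auto).
  assert (hr2 : r * r = u) by (apply sqrt_sqrt; lra).
  assert (HH : (Cconj a * a)%C = (1 - RtoC r * RtoC r)%C).
  { rewrite Cmult_comm, <- Cmod2_conj, <- RtoC_mult, hr2, <- RtoC_minus. unfold u.
    f_equal; ring. }
  assert (rn : RtoC r <> 0%C) by (intro Z; apply (f_equal Re) in Z; simpl in Z; lra).
  assert (rn1 : (1 + RtoC r)%C <> 0%C) by (intro Z; apply (f_equal Re) in Z; simpl in Z; lra).
  rewrite RtoC_plus.
  replace (1 - Cconj a * (a / (1 + r)))%C with (1 - (Cconj a * a) / (1 + r))%C by (field; auto).
  rewrite HH.
  replace (1 - (1 - RtoC r * RtoC r) / (1 + RtoC r))%C with (RtoC r) by (field; auto).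
  field. split; auto.
Qed.

Lemma Q_step s t : (Cconj s * s = 1)%C -> (1 - Cconj s * t <> 0)%C ->
  (t * (s - t) / (1 - Cconj s * t) = s * t)%C.
Proof.
  intros H1 H2.
  assert (E : (1 - Cconj s * t)%C = (Cconj s * (s - t))%C) by (rewrite <- H1; ring).
  rewrite E in *.
  assert (n1 : Cconj s <> 0%C) by (intro Z; rewrite Z in H1; rewrite Cmult_0_l in H1; apply C1_nz; auto).
  assert (n2 : (s - t)%C <> 0%C) by (intro Z; rewrite Z, Cmult_0_r in H2; auto).
  assert (Es : s = (/ Cconj s)%C).
  { transitivity (/ Cconj s * (Cconj s * s))%C. field; auto. rewrite H1; ring. }
  transitivity (t / Cconj s)%C. field; split; auto.
  rewrite Es at 2. unfold Cdiv. ring.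
Qed.

Lemma iter_tends theta : irrational theta -> forall i,
  tends (expi2pi theta) (fun a => Qiter a i (crit a)) (expi2pi (INR (S i) * theta)).
Proof.
  intros Hirr. set (s := expi2pi theta).
  assert (Hs : Cmod s = 1) by apply expi_mod.
  assert (Hss : (Cconj s * s = 1)%C) by (unfold s; rewrite expi_conj, expi_mult, <- expi_0; f_equal; ring).
  induction i as [|i IH].
  - replace (INR 1 * theta) with theta by (simpl; ring). exact (crit_tends s Hs).
  - destruct i as [|j].
    + replace (INR 2 * theta) with (theta + theta) by (simpl; ring).
      rewrite <- expi_mult. fold s.
      apply tends_ext with (fun a => crit a * crit a)%C.
      * apply tends_mult; apply crit_tends; auto.
      * intros a ha. simpl. unfold Qiter. simpl. rewrite Q_crit; auto.
    + set (t := expi2pi (INR (S (S j)) * theta)) in *.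
      assert (Hd : (1 - Cconj s * t <> 0)%C).
      { unfold s, t. rewrite expi_conj, expi_mult.
        replace (- theta + INR (S (S j)) * theta) with (INR (S j) * theta)
          by (rewrite (S_INR (S j)); ring).
        intro Z. apply (expi_neq1 theta (S j) Hirr ltac:(lia)).
        apply Ceq_minus. replace (expi2pi (INR (S j) * theta) - 1)%C
          with (- (1 - expi2pi (INR (S j) * theta)))%C by ring. rewrite Z. ring. }
      replace (expi2pi (INR (S (S (S j))) * theta)) with (t * (s - t) / (1 - Cconj s * t))%C.
      2:{ rewrite Q_step by auto. unfold s, t. rewrite expi_mult. f_equal.
          rewrite (S_INR (S (S j))). ring. }
      change (tends s (fun a => Q a (Qiter a (S j) (crit a))) (t * (s - t) / (1 - Cconj s * t))%C).
      unfold Q.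
      apply tends_div; auto.
      * apply tends_mult; auto. apply tends_minus; auto. apply tends_id.
      * apply tends_minus. apply tends_const. apply tends_mult; auto. apply tends_conj.
Qed.

Theorem lemma4p5 (theta : R) (eps : R) (m : nat) :
  irrational theta -> 0 < eps -> (1 <= m)%nat ->
  exists delta : R, 0 < delta /\
    forall a : C, Cmod a < 1 -> Cmod (expi2pi theta - a)%C < delta ->
      forall i : nat, (i <= m)%nat -> Cmod (Qiter a i (crit a)) > 1 - eps.
Proof.
  intros Hirr Heps _.
  assert (One : forall i, exists d, 0 < d /\ forall a, Cmod a < 1 ->
             Cmod (expi2pi theta - a)%C < d -> Cmod (Qiter a i (crit a)) > 1 - eps).
  { intros i. destruct (iter_tends theta Hirr i eps Heps) as [d [hd H]].
    exists d; split; auto. intros a ha hda. specialize (H a ha hda).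
    pose proof (Cmod_tri3 (expi2pi (INR (S i) * theta)) (Qiter a i (crit a))) as T.
    rewrite expi_mod, Cmod_sub_sym in T. lra. }
  induction m as [|m IH].
  - destruct (One 0%nat) as [d [hd H]]. exists d; split; auto.
    intros a ha hda i hi. replace i with 0%nat by lia. auto.
  - destruct IH as [d1 [hd1 H1]]. destruct (One (S m)) as [d2 [hd2 H2]].
    exists (Rmin d1 d2). split. apply Rmin_pos; auto.
    intros a ha hda i hi. pose proof (Rmin_l d1 d2); pose proof (Rmin_r d1 d2).
    destruct (Nat.eq_dec i (S m)) as [->|ne].
    + apply H2; auto; lra.
    + apply H1; auto; [lra|lia].
Qed.
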